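(* Let $X$ be a reflexive Banach space with norm $\|\cdot\|$, dual space $X^*$ with dual norm $\|\cdot\|_*$ and canonical pairing $\langle\cdot,\cdot\rangle$. Let $L>0$, $\sigma>0$, $N\ge1$, and let real coefficients $\{a_{k,i}\}_{0\le i<k\le N}$, $\{b_{k,i}\}_{0\le i\le k\le N}$ be given with the convention $b_{0,0}=-1$. Let $\{u_i\}_{i=0}^N$ be a positive nondecreasing sequence of reals and set $v_i=1/u_{N-i}$ for $i=0,\dots,N$. Define $\mathbf{U}_{\mathcal A},\mathbf{V}_{\mathcal B}\colon (X^* )^{N+1}\times X^{N+1}\to\mathbb{R}$ as follows. For $(A_0,\dots,A_N,B_0,\dots,B_N)$, put $A_{N+1}=0$, $x_0=B_0$, $x_{k+1}=x_k-\sum_{i=0}^{k+1}b_{k+1,i}B_i$ ($k=0,\dots,N-1$), and \[ \mathbf{U}_{\mathcal A}=\sum_{k=0}^{N-1}\frac{u_k}{2L}\|A_k-A_{k+1}\|_*^2+\sum_{k=0}^{N-1}\frac{\sigma}{2}\|B_k-B_{k+1}\|^2+\sum_{k=0}^{N-1}\Big\langle\sum_{i=0}^{k}a_{k+1,i}A_i,\,B_{k+1}\Big\rangle-\sum_{k=0}^{N}u_k\langle A_k-A_{k+1},x_k\rangle . \] For $(C_0,\dots,C_N,D_0,\dots,D_N)$, put \[ \mathbf{V}_{\mathcal B}=\sum_{k=0}^{N-1}\frac{v_{k+1}}{2L}\|C_k-C_{k+1}\|_*^2+\sum_{k=0}^{N-1}\frac{\sigma}{2}\|D_k-D_{k+1}\|^2+\sum_{k=0}^{N}\Big\langle\sum_{i=0}^{k}b_{N-i,N-k}C_i,\,D_k\Big\rangle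 \] \[ \qquad+\sum_{k=0}^{N-1}\Big\langle v_{k+1}C_{k+1}-\sum_{j=0}^{k}(v_{j+1}-v_j)C_j,\ \sum_{i=0}^{k}a_{N-i,N-1-k}D_i\Big\rangle . \] Then \[ \inf_{(X^* )^{N+1}\times X^{N+1}}\mathbf{U}_{\mathcal A}=\inf_{(X^* )^{N+1}\times X^{N+1}}\mathbf{V}_{\mathcal B} \] (as elements of $\mathbb{R}\cup\{-\infty\}$).
   Context: Here $\mathbf{U}_{\mathcal A}$ is the residual (after telescoping) of a standard energy-function proof of a bound on $f(x_N)-f(x)$ for the CFOM $y_{k+1}=y_k-\sum_{i\le k}a_{k+1,i}\nabla f(x_i)$, $x_{k+1}=x_k-\sum_{i\le k+1}b_{k+1,i}\nabla\phi^*(y_i)$, with $A_i$ standing for $\nabla f(x_i)$ and $B_i$ for $\nabla\phi^*(y_i)$; $\mathbf{V}_{\mathcal B}$ is the analogous residual for its mirror dual $q_{k+1}=q_k-\sum_{i\le k}a_{N-i,N-1-k}\nabla\psi^*(r_i)$, $r_{k+1}=r_k-\sum_{i\le k+1}b_{N-i,N-1-k}\nabla f(q_i)$, $r_0=-b_{N,N}\nabla f(q_0)$, with $C_i$ standing for $\nabla f(q_i)$ and $D_i$ for $\nabla\psi^*(r_i)$. The claim is purely about the two explicit functions above. *)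

(* Defs.v *)
From HB Require Import structures.
From mathcomp Require Import all_boot all_order all_algebra.
From mathcomp Require Import all_classical all_reals all_analysis.
Set Implicit Arguments. Unset Strict Implicit. Unset Printing Implicit Defensive.
Import Order.TTheory GRing.Theory Num.Theory.
Import numFieldNormedType.Exports.
Local Open Scope classical_set_scope.
Local Open Scope ring_scope.

Section Defs.
Variables (R : realType) (X : normedModType R).

Definition dual_el (f : X -> R) : Prop :=
  [/\ (forall x y : X, f (x + y) = f x + f y),
      (forall (a : R) (x : X), f (a *: x) = a * f x) &
      continuous f].

Definition dnorm (f : X -> R) : R :=
  sup [set `|f x| | x in [set x : X | `|x| <= 1]].

(** Reflexivity: the canonical embedding X -> X^** is onto, i.e. every
    bounded linear functional Phi on X^* is evaluation at some x in X. *)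
Definition reflexive_space : Prop :=
  forall Phi : (X -> R) -> R,
    (forall f g, dual_el f -> dual_el g -> Phi (fun x => f x + g x) = Phi f + Phi g) ->
    (forall (a : R) f, dual_el f -> Phi (fun x => a * f x) = a * Phi f) ->
    (exists C : R, forall f, dual_el f -> `|Phi f| <= C * dnorm f) ->
    exists x : X, forall f, dual_el f -> Phi f = f x.

Definition fsub (f g : X -> R) : X -> R := fun x => f x - g x.

Fixpoint xseq (b : nat -> nat -> R) (B : nat -> X) (k : nat) : X :=
  match k with
  | 0 => B 0%N
  | k'.+1 => xseq b B k' - \sum_(0 <= i < k'.+2) b k'.+1 i *: B i
  end.

Variables (L sigma : R) (N : nat) (a b : nat -> nat -> R) (u : nat -> R).

Definition Aext (A : nat -> X -> R) (k : nat) : X -> R :=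
  if (k <= N)%N then A k else (fun _ => 0).

Definition U_A (A : nat -> X -> R) (B : nat -> X) : R :=
  \sum_(0 <= k < N) (u k / (2 * L)) * (dnorm (fsub (A k) (A k.+1))) ^+ 2
  + \sum_(0 <= k < N) (sigma / 2) * `|B k - B k.+1| ^+ 2
  + \sum_(0 <= k < N) (\sum_(0 <= i < k.+1) a k.+1 i * A i (B k.+1))
  - \sum_(0 <= k < N.+1) u k * (fsub (A k) (Aext A k.+1)) (xseq b B k).

Definition v (i : nat) : R := 1 / u (N - i)%N.

Definition V_B (C : nat -> X -> R) (D : nat -> X) : R :=
  \sum_(0 <= k < N) (v k.+1 / (2 * L)) * (dnorm (fsub (C k) (C k.+1))) ^+ 2
  + \sum_(0 <= k < N) (sigma / 2) * `|D k - D k.+1| ^+ 2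
  + \sum_(0 <= k < N.+1) (\sum_(0 <= i < k.+1) b (N - i)%N (N - k)%N * C i (D k))
  + \sum_(0 <= k < N)
      (fun x => v k.+1 * C k.+1 x
                - \sum_(0 <= j < k.+1) (v j.+1 - v j) * C j x)
      (\sum_(0 <= i < k.+1) a (N - i)%N (N - 1 - k)%N *: D i).

Definition inf_U : \bar R :=
  ereal_inf [set y | exists (A : nat -> X -> R) (B : nat -> X),
     (forall i, (i <= N)%N -> dual_el (A i)) /\ y = (U_A A B)%:E].

Definition inf_V : \bar R :=
  ereal_inf [set y | exists (C : nat -> X -> R) (D : nat -> X),
     (forall i, (i <= N)%N -> dual_el (C i)) /\ y = (V_B C D)%:E].

End Defs.

(* Main.v *)
Require Import Defs.
From HB Require Import structures.
From mathcomp Require Import all_boot all_order all_algebra.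
From mathcomp Require Import all_classical all_reals all_analysis.
From mathcomp Require Import zify ring lra.
Import Order.TTheory GRing.Theory Num.Theory.
Import numFieldNormedType.Exports.
Set Implicit Arguments. Unset Strict Implicit.
Local Open Scope classical_set_scope.
Local Open Scope ring_scope.

Section Aux.
Variables (R : realType) (X : normedModType R).

Lemma sup_scale (T : Type) (B : set T) (h : T -> R) (c : R) : 0 < c ->
  sup [set c * h x | x in B] = c * sup [set h x | x in B].
Proof.
move=> c0.
have hsS' : has_sup [set h x | x in B] -> has_sup [set c * h x | x in B].
  move=> [[_ [x Bx _]] [M HM]]; split; first by exists (c * h x), x.
  exists (c * M) => _ [z Bz <-]; rewrite ler_pM2l //; apply: HM; by exists z.
have hsS : has_sup [set c * h x | x in B] -> has_sup [set h x | x in B].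
  move=> [[_ [x Bx _]] [M HM]]; split; first by exists (h x), x.
  exists (M / c) => _ [z Bz <-]; rewrite ler_pdivlMr // mulrC; apply: HM; by exists z.
case: (boolp.pselect (has_sup [set h x | x in B])) => hs; last first.
  rewrite !sup_out ?mulr0 //; by move/hsS.
have hs' := hsS' hs.
apply/le_anti/andP; split.
  apply: ge_sup; first by case: hs'.
  move=> _ [x Bx <-]; rewrite ler_pM2l //; apply: sup_upper_bound => //; by exists x.
rewrite -ler_pdivlMl //; apply: ge_sup; first by case: hs.
move=> _ [x Bx <-]; rewrite ler_pdivlMl //; apply: sup_upper_bound => //; by exists (x).
Qed.

Lemma dnorm_scale (g : X -> R) (c : R) : 0 < `|c| ->
  dnorm (fun x => c * g x) = `|c| * dnorm g.
Proof.
move=> c0; rewrite /dnorm -sup_scale //.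
by congr sup; apply: boolp.funext => y; apply: boolp.propext; split;
  move=> [x Bx <-]; exists x => //; rewrite normrM.
Qed.

Lemma dual0 (f : X -> R) : dual_el f -> f 0 = 0 :> R.
Proof. move=> [fD _ _]; have := fD 0 0; rewrite addr0 => h; apply: (addrI (f 0)); rewrite addr0 -h //. Qed.

Lemma dual_sumE (f : X -> R) (m n : nat) (F : nat -> X) : dual_el f ->
  f (\sum_(m <= i < n) F i) = \sum_(m <= i < n) f (F i).
Proof. move=> hf; have [fD _ _] := hf; apply: (big_morph f); [exact: fD | exact: dual0]. Qed.

Lemma dualZE (f : X -> R) c y : dual_el f -> f (c *: y) = c * f y.
Proof. by case. Qed.

Lemma dualBE (f : X -> R) y z : dual_el f -> f (y - z) = f y - f z.
Proof.
move=> hf; have [fD fZ _] := hf.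
by rewrite fD -scaleN1r fZ mulN1r.
Qed.

Lemma dual_add (f g : X -> R) : dual_el f -> dual_el g -> dual_el (fun x => f x + g x).
Proof.
move=> [fD fZ fc] [gD gZ gc]; split.
- by move=> x y; rewrite fD gD addrACA.
- by move=> c x; rewrite fZ gZ mulrDr.
- by move=> x; apply: continuousD; [exact: fc|exact: gc].
Qed.

Lemma dual_scale c (f : X -> R) : dual_el f -> dual_el (fun x => c * f x).
Proof.
move=> [fD fZ fc]; split.
- by move=> x y; rewrite fD mulrDr.
- by move=> d x; rewrite fZ mulrCA.
- by move=> x; apply: continuousM; [exact: cst_continuous|exact: fc].
Qed.

Lemma dual_zero : dual_el (fun _ : X => 0 : R).
Proof.
split; [by move=> *; rewrite addr0 | by move=> *; rewrite mulr0 | exact: cst_continuous].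
Qed.

Lemma dual_sub (f g : X -> R) : dual_el f -> dual_el g -> dual_el (fun x => f x - g x).
Proof.
move=> hf hg; have -> : (fun x => f x - g x) = (fun x => f x + (-1) * g x).
  by apply: boolp.funext => x; rewrite mulN1r.
exact: dual_add hf (dual_scale (-1) hg).
Qed.

Lemma dual_sum (F : nat -> X -> R) m n :
  (forall i, (m <= i < n)%N -> dual_el (F i)) ->
  dual_el (fun x => \sum_(m <= i < n) F i x).
Proof.
elim: n => [|n IH] H.
  have -> : (fun x => \sum_(m <= i < 0) F i x) = fun=> 0.
    by apply: boolp.funext => x; rewrite big_geq.
  exact: dual_zero.
case: (leqP m n) => hmn.
  have -> : (fun x => \sum_(m <= i < n.+1) F i x) = fun x => \sum_(m <= i < n) F i x + F n x.
    by apply: boolp.funext => x; rewrite big_nat_recr.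
  apply: dual_add; last by apply: H; rewrite hmn ltnSn.
  apply: IH => i /andP[h1 h2]; apply: H; rewrite h1 /=; exact: ltnW.
have -> : (fun x => \sum_(m <= i < n.+1) F i x) = fun=> 0.
  by apply: boolp.funext => x; rewrite big_geq.
exact: dual_zero.
Qed.


Lemma dualNE (f : X -> R) y : dual_el f -> f (- y) = - f y.
Proof. by move=> hf; rewrite -sub0r dualBE // dual0 // sub0r. Qed.

Lemma tri_hi (F : nat -> R) m n : (m <= n)%N ->
  \sum_(0 <= t < n) (if (t < m)%N then F t else 0) = \sum_(0 <= t < m) F t.
Proof. by move=> h; rewrite (big_nat_widen _ _ _ _ _ h) [RHS]big_mkcond. Qed.

Lemma rev1 (F : nat -> R) n :
  \sum_(0 <= i < n.+1) F i = \sum_(0 <= i < n.+1) F (n - i)%N.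
Proof. by rewrite [LHS]big_nat_rev; apply: eq_bigr => i _; rewrite add0n subSS. Qed.

Lemma if_sum (c : bool) m n (F : nat -> R) :
  (if c then \sum_(m <= i < n) F i else 0) = \sum_(m <= i < n) (if c then F i else 0).
Proof. by case: c => //=; rewrite big1. Qed.

Lemma ifif (c1 c2 : bool) (T : R) :
  (if c1 then (if c2 then T else 0) else 0) = if c1 && c2 then T else 0.
Proof. by case: c1. Qed.

End Aux.

Section Main.
Variables (R : realType) (X : normedModType R) (L sigma : R) (N : nat)
  (a b : nat -> nat -> R) (u : nat -> R).
Hypothesis Hu : forall i, (i <= N)%N -> 0 < u i.
Hypothesis Hb : b 0%N 0%N = -1.
Hypothesis HN : (1 <= N)%N.
Hypothesis HL : 0 < L.

Implicit Types (A : nat -> X -> R) (B : nat -> X).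

Definition wA A j x := u j * (Aext N A j x - Aext N A j.+1 x).
Definition TC A i x := \sum_(0 <= l < i.+1) wA A (N - l)%N x.
Definition TD B k := B (N - k)%N.

Lemma AextE A k : (k <= N)%N -> Aext N A k = A k.
Proof. by move=> h; rewrite /Aext h. Qed.

Lemma AextN A x : Aext N A N.+1 x = 0.
Proof. by rewrite /Aext ltnn. Qed.

Lemma dual_Aext A k : (forall i, (i <= N)%N -> dual_el (A i)) -> dual_el (Aext N A k).
Proof. move=> hA; rewrite /Aext; case: ifP => h; [exact: hA | exact: dual_zero]. Qed.

Lemma dual_wA A j : (forall i, (i <= N)%N -> dual_el (A i)) -> dual_el (wA A j).
Proof.
move=> hA; exact: (dual_scale (u j) (dual_sub (dual_Aext j hA) (dual_Aext j.+1 hA))).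
Qed.

Lemma dual_TC A i : (forall i, (i <= N)%N -> dual_el (A i)) -> dual_el (TC A i).
Proof. move=> hA; apply: dual_sum => l _; exact: dual_wA. Qed.

Lemma uneq j : (j <= N)%N -> u j != 0.
Proof. by move=> h; rewrite gt_eqF ?Hu. Qed.

Lemma vw A j x : v N u j * wA A (N - j) x = Aext N A (N - j) x - Aext N A (N - j).+1 x.
Proof.
rewrite /v /wA mulrA mul1r mulVf ?mul1r //; apply: uneq; exact: leq_subr.
Qed.

Lemma TC_S A j x : TC A j.+1 x = TC A j x + wA A (N - j.+1) x.
Proof. by rewrite /TC big_nat_recr. Qed.

Lemma TC_0 A x : TC A 0 x = wA A N x.
Proof. by rewrite /TC big_nat1 subn0. Qed.

Lemma Glem A k x : (k < N)%N ->
  v N u k.+1 * TC A k.+1 x - \sum_(0 <= j < k.+1) (v N u j.+1 - v N u j) * TC A j x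
  = Aext N A (N - k.+1) x.
Proof.
elim: k => [|k IH] hk.
  rewrite big_nat1 TC_S TC_0.
  transitivity (v N u 1 * wA A (N - 1) x + v N u 0 * wA A (N - 0) x).
    by rewrite subn0; ring.
  rewrite !vw subn0 AextN.
  have -> : (N - 1).+1 = N by lia.
  ring.
rewrite big_nat_recr //= TC_S.
transitivity ((v N u k.+1 * TC A k.+1 x - \sum_(0 <= j < k.+1) (v N u j.+1 - v N u j) * TC A j x)
   + v N u k.+2 * wA A (N - k.+2) x); first by ring.
rewrite IH; last by lia.
rewrite vw subnSK //; ring.
Qed.


Lemma Q1E A :
  \sum_(0 <= k < N) (v N u k.+1 / (2 * L)) * (dnorm (fsub (TC A k) (TC A k.+1))) ^+ 2 =
  \sum_(0 <= k < N) (u k / (2 * L)) * (dnorm (fsub (A k) (A k.+1))) ^+ 2.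
Proof.
rewrite [RHS]big_nat_rev /=; apply: eq_big_nat => k /andP[_ hk].
rewrite add0n.
have -> : fsub (TC A k) (TC A k.+1) =
    (fun x => (- u (N - k.+1)%N) * fsub (A (N - k.+1)%N) (A (N - k.+1).+1) x).
  apply: boolp.funext => x; rewrite /fsub TC_S /wA.
  rewrite AextE; last by lia.
  rewrite AextE; last by lia.
  ring.
have hu : 0 < u (N - k.+1)%N by apply: Hu; lia.
rewrite dnorm_scale; last by rewrite normrN gtr0_norm.
rewrite normrN gtr0_norm // /v.
field.
by rewrite !gt_eqF.
Qed.

Lemma Q2E B :
  \sum_(0 <= k < N) (sigma / 2) * `|TD B k - TD B k.+1| ^+ 2 =
  \sum_(0 <= k < N) (sigma / 2) * `|B k - B k.+1| ^+ 2.
Proof.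
rewrite [RHS]big_nat_rev /=; apply: eq_big_nat => k /andP[_ hk].
by rewrite add0n /TD subnSK // distrC.
Qed.


Lemma Q4E A B (hA : forall i, (i <= N)%N -> dual_el (A i)) :
  \sum_(0 <= k < N)
      (fun x => v N u k.+1 * TC A k.+1 x - \sum_(0 <= j < k.+1) (v N u j.+1 - v N u j) * TC A j x)
      (\sum_(0 <= i < k.+1) a (N - i)%N (N - 1 - k)%N *: TD B i)
  = \sum_(0 <= k < N) (\sum_(0 <= i < k.+1) a k.+1 i * A i (B k.+1)).
Proof.
transitivity (\sum_(0 <= s < N) \sum_(0 <= t < N.+1)
   (if (s < t)%N then a t s * A s (B t) else 0)).
  rewrite big_nat_rev /=; apply: eq_big_nat => k /andP[_ hk]; rewrite add0n.
  rewrite Glem; last by lia.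
  have e1 : (N - (N - k.+1).+1 = k)%N by lia.
  have e2 : (N - 1 - (N - k.+1) = k)%N by lia.
  have e3 : ((N - k.+1).+1 = N - k)%N by lia.
  rewrite e1 e2 e3 AextE; last by lia.
  rewrite dual_sumE; last by apply: hA; lia.
  have hAk := hA k (ltnW hk).
  rewrite -(tri_hi _ (m:=(N-k)%N) (n:=N.+1)); last by lia.
  rewrite rev1; apply: eq_big_nat => i /andP[_ hi].
  have -> : (N - i < N - k)%N = (k < i)%N by apply/idP/idP; lia.
  rewrite /TD subKn; last by lia.
  by rewrite (dualZE _ _ hAk).
transitivity (\sum_(0 <= s < N) \sum_(0 <= k < N)
   (if (s < k.+1)%N then a k.+1 s * A s (B k.+1) else 0)).
  apply: eq_bigr => s _.
  by rewrite big_nat_recl //= ?ltn0 ?add0r.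
rewrite exchange_big_nat /=.
apply: eq_big_nat => k /andP[_ hk].
by rewrite tri_hi.
Qed.

Lemma xseqE B k :
  xseq b B k = - \sum_(0 <= l < k.+1) \sum_(0 <= m < l.+1) b l m *: B m.
Proof.
elim: k => [|k IH] /=.
  by rewrite !big_nat1 Hb scaleN1r opprK.
by rewrite IH [in RHS]big_nat_recr //= opprD.
Qed.

Definition cube A B := \sum_(0 <= k < N.+1) \sum_(0 <= l < N.+1) \sum_(0 <= m < N.+1)
   (if (l <= k)%N && (m <= l)%N then b l m * wA A k (B m) else 0).

Lemma P4E A B (hA : forall i, (i <= N)%N -> dual_el (A i)) :
  - \sum_(0 <= k < N.+1) u k * (fsub (A k) (Aext N A k.+1)) (xseq b B k) = cube A B.
Proof.
rewrite -sumrN; apply: eq_big_nat => k /andP[_ hk].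
have -> : u k * fsub (A k) (Aext N A k.+1) (xseq b B k) = wA A k (xseq b B k).
  by rewrite /wA /fsub (AextE A hk).
have hw := dual_wA k hA.
rewrite xseqE (dualNE _ hw) (opprK (wA A k _)) dual_sumE //.
rewrite -(tri_hi _ (m:=k.+1) (n:=N.+1)) //.
apply: eq_bigr => l _.
rewrite dual_sumE //.
case: ifP => hl /=.
  rewrite -(tri_hi _ (m:=l.+1) (n:=N.+1)); last by lia.
  apply: eq_bigr => m _.
  rewrite (dualZE _ _ hw).
  by rewrite ltnS in hl; rewrite hl /= ltnS.
rewrite big1 // => m _.
by rewrite ltnS in hl; rewrite hl.
Qed.

Lemma Q3E A B :
  \sum_(0 <= k < N.+1) (\sum_(0 <= i < k.+1) b (N - i)%N (N - k)%N * TC A i (TD B k))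
  = cube A B.
Proof.
transitivity (\sum_(0 <= m < N.+1) \sum_(0 <= l < N.+1) \sum_(0 <= k < N.+1)
   (if (m <= l)%N && (l <= k)%N then b l m * wA A k (B m) else 0)).
  rewrite [LHS]rev1; apply: eq_big_nat => m /andP[_ hm].
  rewrite /TD subKn; last by lia.
  rewrite -(tri_hi _ (m:=(N-m).+1) (n:=N.+1)); last by lia.
  rewrite rev1; apply: eq_big_nat => l /andP[_ hl].
  rewrite subKn; last by lia.
  have -> : (N - l < (N - m).+1)%N = (m <= l)%N by apply/idP/idP => ?; lia.
  case: ifP => hml /=; last by rewrite big1.
  rewrite /TC mulr_sumr.
  rewrite -(tri_hi _ (m:=(N-l).+1) (n:=N.+1)); last by lia.
  rewrite rev1; apply: eq_big_nat => k /andP[_ hk].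
  rewrite subKn; last by lia.
  have -> : (N - k < (N - l).+1)%N = (l <= k)%N by apply/idP/idP => ?; lia.
  by case: ifP.
rewrite /cube.
under eq_bigr => m _ do rewrite exchange_big_nat.
rewrite exchange_big_nat.
apply: eq_bigr => k _; rewrite exchange_big_nat.
apply: eq_bigr => l _; apply: eq_bigr => m _.
by rewrite andbC.
Qed.

Lemma mainEq A B (hA : forall i, (i <= N)%N -> dual_el (A i)) :
  V_B L sigma N a b u (TC A) (TD B) = U_A L sigma N a b u A B.
Proof.
rewrite /V_B /U_A Q1E Q2E (Q4E B hA) Q3E -(P4E B hA).
ring.
Qed.

Lemma V_congr (C C' : nat -> X -> R) (D D' : nat -> X) :
  (forall i, (i <= N)%N -> C i = C' i) -> (forall i, (i <= N)%N -> D i = D' i) ->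
  V_B L sigma N a b u C D = V_B L sigma N a b u C' D'.
Proof.
move=> hC hD; rewrite /V_B.
congr (_ + _ + _ + _).
- apply: eq_big_nat => k /andP[_ hk].
  by rewrite (hC k (ltnW hk)) (hC k.+1 hk).
- apply: eq_big_nat => k /andP[_ hk].
  by rewrite (hD k (ltnW hk)) (hD k.+1 hk).
- apply: eq_big_nat => k /andP[_ hk].
  rewrite (hD k hk); apply: eq_big_nat => i /andP[_ hi].
  rewrite hC //; lia.
- apply: eq_big_nat => k /andP[_ hk].
  have e1 : \sum_(0 <= i < k.+1) a (N - i)%N (N - 1 - k)%N *: D i =
            \sum_(0 <= i < k.+1) a (N - i)%N (N - 1 - k)%N *: D' i.
    apply: eq_big_nat => i /andP[_ hi]; rewrite hD //; lia.
  rewrite /= e1 (hC k.+1 hk); congr (_ - _).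
  apply: eq_big_nat => j /andP[_ hj]; rewrite hC //; lia.
Qed.

Definition Dl (C : nat -> X -> R) l x := C l x - (if l is l'.+1 then C l' x else 0).
Definition Ainv (C : nat -> X -> R) j x :=
  \sum_(0 <= l < (N - j).+1) (u (N - l)%N)^-1 * Dl C l x.

Lemma wA_inv C j x : (j <= N)%N -> wA (Ainv C) j x = Dl C (N - j) x.
Proof.
move=> hj; rewrite /wA AextE //.
case: (ltnP j N) => hjN.
  rewrite AextE //.
  rewrite /Ainv subnSK // big_nat_recr //= subKn //.
  have hu : u j != 0 by apply: uneq.
  by field.
have -> : j = N by apply/eqP; rewrite eqn_leq hj hjN.
rewrite AextN /Ainv subnn big_nat1 subn0.
have hu : u N != 0 by apply: uneq.
by field.
Qed.

Lemma TC_inv C i x : (i <= N)%N -> TC (Ainv C) i x = C i x.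
Proof.
elim: i => [|i IH] hi.
  by rewrite TC_0 wA_inv // subnn /Dl subr0.
rewrite TC_S IH; last by lia.
rewrite wA_inv; last by lia.
rewrite subKn // /Dl; ring.
Qed.

Lemma dual_Ainv C : (forall i, (i <= N)%N -> dual_el (C i)) ->
  forall j, dual_el (Ainv C j).
Proof.
move=> hC j; apply: dual_sum => l /andP[_ hl]; apply: dual_scale.
rewrite /Dl; case: l hl => [|l] hl.
  apply: dual_sub; [exact: hC | exact: dual_zero].
apply: dual_sub; apply: hC; lia.
Qed.

Lemma inf_eq : inf_U X L sigma N a b u = inf_V X L sigma N a b u.
Proof.
rewrite /inf_U /inf_V; congr ereal_inf; apply/seteqP; split => _ [A [B [hA ->]]].
  exists (TC A), (TD B); split; first by move=> i _; exact: dual_TC.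
  by rewrite mainEq.
exists (Ainv A), (fun k => B (N - k)%N); split.
  by move=> i _; exact: dual_Ainv.
rewrite -mainEq; last by move=> i _; exact: dual_Ainv.
congr (_%:E); apply: V_congr => i hi.
  by apply: boolp.funext => x; rewrite TC_inv.
by rewrite /TD subKn.
Qed.

End Main.

Theorem theorem3p2 (R : realType) (X : completeNormedModType R)
  (L sigma : R) (N : nat) (a b : nat -> nat -> R) (u : nat -> R) :
  reflexive_space X ->
  0 < L -> 0 < sigma -> (1 <= N)%N ->
  b 0%N 0%N = -1 ->
  (forall i, (i <= N)%N -> 0 < u i) ->
  (forall i, (i < N)%N -> u i <= u i.+1) ->
  inf_U X L sigma N a b u = inf_V X L sigma N a b u.
Proof.
move=> _ HL _ HN Hb Hu _.
exact: (@inf_eq R X L sigma N a b u Hu Hb HN HL).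
Qed.
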